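(* Let $X$ be a homogeneous subspace of the Cantor set $2^\omega$ such that $X\in\Delta$. Then $X\in\mathsf{D}_\ell(\mathbf{\Sigma}^0_2)$ for some finite $\ell\in\omega$.
   Context: Spaces are separable metrizable. For an ordinal $\eta<\omega_1$ and an increasing sequence of sets $\langle A_\zeta:\zeta<\eta\rangle$, let $\mathsf{D}(\langle A_\zeta:\zeta<\eta\rangle)$ be the union of the sets $A_\zeta\setminus\bigcup_{\beta<\zeta}A_\beta$ over those $\zeta<\eta$ whose parity is opposite to that of $\eta$ (i.e. $\zeta$ odd if $\eta$ is even, $\zeta$ even if $\eta$ is odd; limit ordinals count as even). For a space $Z$, $\mathsf{D}^Z_\eta(\mathbf{\Sigma}^0_2)$ is the family of sets $\mathsf{D}(\langle A_\zeta:\zeta<\eta\rangle)$ with each $A_\zeta$ an $F_\sigma$ subset of $Z$ and the sequence increasing. A space $X$ is (absolutely) $\mathsf{D}_\eta(\mathbf{\Sigma}^0_2)$ if for every space $Z$ and every subspace $Y\subseteq Z$ homeomorphic to $X$ one has $Y\in\mathsf{D}^Z_\eta(\mathbf{\Sigma}^0_2)$; it is (absolutely) $\check{\mathsf{D}}_\eta(\mathbf{\Sigma}^0_2)$ if for every such $Y\subseteq Z$ one has $Z\setminus Y\in\mathsf{D}^Z_\eta(\mathbf{\Sigma}^0_2)$. Finally $\Delta=\mathsf{D}_\omega(\mathbf{\Sigma}^0_2)\cap\check{\mathsf{D}}_\omega(\mathbf{\Sigma}^0_2)$. A space $X$ is homogeneous if for all $x,y\in X$ there is a homeomorphism $h:X\to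 X$ with $h(x)=y$. *)

(* Defs.v *)
From Stdlib Require Import Reals Lra ClassicalEpsilon Arith.
Open Scope R_scope.

Record space := Space { pt :> Type; dist : pt -> pt -> R }.
Arguments dist {s} _ _.

Definition is_metric (X : space) : Prop :=
  (forall x y : X, 0 <= dist x y) /\
  (forall x y : X, dist x y = 0 <-> x = y) /\
  (forall x y : X, dist x y = dist y x) /\
  (forall x y z : X, dist x z <= dist x y + dist y z).

(** separable: a countable dense subset (possibly empty, via option). *)
Definition separable (X : space) : Prop :=
  exists s : nat -> option X, forall (x : X) (eps : R), 0 < eps ->
    exists n y, s n = Some y /\ dist x y < eps.

(** separable metric space (models a separable metrizable space) *)
Definition sep_metric (X : space) : Prop := is_metric X /\ separable X.

Definition is_open {X : space} (U : X -> Prop) : Prop :=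
  forall x, U x -> exists eps, 0 < eps /\ forall y, dist x y < eps -> U y.

Definition is_closed {X : space} (F : X -> Prop) : Prop :=
  is_open (fun x => ~ F x).

Definition Fsigma {X : space} (A : X -> Prop) : Prop :=
  exists F : nat -> X -> Prop, (forall n, is_closed (F n)) /\
    forall x, A x <-> exists n, F n x.

Definition continuous {X Y : space} (f : X -> Y) : Prop :=
  forall x eps, 0 < eps -> exists delta, 0 < delta /\
    forall y, dist x y < delta -> dist (f x) (f y) < eps.

Definition embedding {X Z : space} (e : X -> Z) : Prop :=
  continuous e /\ (forall x y, e x = e y -> x = y) /\
  (forall x eps, 0 < eps -> exists delta, 0 < delta /\
     forall y, dist (e x) (e y) < delta -> dist x y < eps).

Definition homeomorphism {X : space} (h : X -> X) : Prop :=
  exists g : X -> X, (forall x, g (h x) = x) /\ (forall y, h (g y) = y) /\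
    continuous h /\ continuous g.

Definition homogeneous (X : space) : Prop :=
  forall x y : X, exists h : X -> X, homeomorphism h /\ h x = y.

(** Difference hierarchy, for eta = ell finite and eta = omega.
    Limit ordinals count as even; omega is even so odd zeta are used. *)
Definition Dfin {Z : Type} (ell : nat) (A : nat -> Z -> Prop) (z : Z) : Prop :=
  exists zeta, (zeta < ell)%nat /\ Nat.odd zeta <> Nat.odd ell /\
    A zeta z /\ forall beta, (beta < zeta)%nat -> ~ A beta z.

Definition Domega {Z : Type} (A : nat -> Z -> Prop) (z : Z) : Prop :=
  exists zeta, Nat.odd zeta = true /\
    A zeta z /\ forall beta, (beta < zeta)%nat -> ~ A beta z.

(** D^Z_ell(Sigma^0_2): only indices < ell are relevant *)
Definition D_fin_class (Z : space) (ell : nat) (Y : Z -> Prop) : Prop :=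
  exists A : nat -> Z -> Prop,
    (forall n, (n < ell)%nat -> Fsigma (A n)) /\
    (forall i j z, (i <= j)%nat -> (j < ell)%nat -> A i z -> A j z) /\
    (forall z, Y z <-> Dfin ell A z).

Definition D_omega_class (Z : space) (Y : Z -> Prop) : Prop :=
  exists A : nat -> Z -> Prop,
    (forall n, Fsigma (A n)) /\
    (forall i j z, (i <= j)%nat -> A i z -> A j z) /\
    (forall z, Y z <-> Domega A z).

Definition abs_D_fin (X : space) (ell : nat) : Prop :=
  forall Z : space, sep_metric Z -> forall e : X -> Z, embedding e ->
    D_fin_class Z ell (fun z => exists x, e x = z).

Definition abs_D_omega (X : space) : Prop :=
  forall Z : space, sep_metric Z -> forall e : X -> Z, embedding e ->
    D_omega_class Z (fun z => exists x, e x = z).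

Definition abs_Dcheck_omega (X : space) : Prop :=
  forall Z : space, sep_metric Z -> forall e : X -> Z, embedding e ->
    D_omega_class Z (fun z => ~ exists x, e x = z).

Definition in_Delta (X : space) : Prop := abs_D_omega X /\ abs_Dcheck_omega X.

Definition cantor_dist (x y : nat -> bool) : R :=
  epsilon (inhabits 0%R) (fun r =>
    (x = y /\ r = 0) \/
    exists n, x n <> y n /\ (forall m, (m < n)%nat -> x m = y m) /\ r = (/ 2) ^ n).

Definition cantor_subspace (X : (nat -> bool) -> Prop) : space :=
  @Space {x : nat -> bool | X x}
         (fun a b => cantor_dist (proj1_sig a) (proj1_sig b)).

(* Main.v *)
From Stdlib Require Import Reals Lra Lia Arith Cantor ClassicalEpsilon Classical ProofIrrelevance FunctionalExtensionality.
Require Import Defs.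
Open Scope R_scope.

Lemma half_pow_pos n : 0 < (/2)^n.
Proof. apply pow_lt; lra. Qed.

Lemma small_pow eps : 0 < eps -> exists n, (/2)^n < eps.
Proof.
  intros H. destruct (pow_lt_1_zero (/2)) with (y:=eps) as [N HN]; auto.
  rewrite Rabs_pos_eq; lra.
  exists N. specialize (HN N (le_n _)). rewrite Rabs_pos_eq in HN; auto.
  left; apply half_pow_pos.
Qed.

Lemma half_pow_le a b : (a <= b)%nat -> (/2)^b <= (/2)^a.
Proof.
  intros H. replace b with (a + (b-a))%nat by lia. rewrite pow_add.
  pose proof (half_pow_pos a).
  assert ((/2)^(b-a) <= 1).
  { induction (b-a)%nat; simpl. lra. pose proof (half_pow_pos n). nra. }
  nra.
Qed.

Lemma least_nat (P : nat -> Prop) : (exists n, P n) -> exists n, P n /\ forall m, (m < n)%nat -> ~ P m.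
Proof.
  intros [n Hn]. induction n as [n IH] using lt_wf_ind.
  destruct (classic (exists m, (m < n)%nat /\ P m)) as [[m [Hm Pm]]|H].
  - exact (IH m Hm Pm).
  - exists n; split; auto. intros m Hm Pm; apply H; eauto.
Qed.

Section Metric.
Variable Z : space.
Hypothesis HZ : is_metric Z.

Lemma d_refl (z : Z) : dist z z = 0.
Proof. destruct HZ as [_ [H _]]. apply H; auto. Qed.
Lemma d_sym (z w : Z) : dist z w = dist w z.
Proof. destruct HZ as [_ [_ [H _]]]. apply H. Qed.
Lemma d_tri (x y z : Z) : dist x z <= dist x y + dist y z.
Proof. destruct HZ as [_ [_ [_ H]]]. apply H. Qed.
Lemma d_pos (x y : Z) : 0 <= dist x y.
Proof. destruct HZ as [H _]. apply H. Qed.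

Definition cl (S : Z -> Prop) (z : Z) : Prop :=
  forall eps, 0 < eps -> exists s, S s /\ dist z s < eps.

Lemma cl_incl (S : Z -> Prop) z : S z -> cl S z.
Proof. intros H eps He. exists z; split; auto. rewrite d_refl; auto. Qed.

Lemma cl_closed S : is_closed (cl S).
Proof.
  intros x Hx. apply not_all_ex_not in Hx as [eps Hx].
  apply imply_to_and in Hx as [He Hx].
  exists (eps/2); split; [lra|]. intros y Hy Hcl.
  destruct (Hcl (eps/2)) as [s [Ss Hs]]; [lra|].
  apply Hx. exists s; split; auto. pose proof (d_tri x y s). lra.
Qed.

Lemma open_compl_closed (O : Z -> Prop) : is_open O -> is_closed (fun z => ~ O z).
Proof.
  intros H x Hx. apply NNPP in Hx. destruct (H x Hx) as [e [He H2]].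
  exists e; split; auto.
Qed.

Lemma closed_compl_open (C : Z -> Prop) : is_closed C -> is_open (fun z => ~ C z).
Proof. intros H. exact H. Qed.

Lemma closed_inter (C D : Z -> Prop) : is_closed C -> is_closed D -> is_closed (fun z => C z /\ D z).
Proof.
  intros HC HD x Hx. apply not_and_or in Hx as [Hx|Hx].
  - destruct (HC x Hx) as [e [He H]]. exists e; split; auto. intros y Hy [Cy _]. exact (H y Hy Cy).
  - destruct (HD x Hx) as [e [He H]]. exists e; split; auto. intros y Hy [_ Dy]. exact (H y Hy Dy).
Qed.

Lemma closed_empty : is_closed (fun _ : Z => False).
Proof. intros x _. exists 1; split; [lra|]. auto. Qed.

Lemma open_Fsigma (O : Z -> Prop) : is_open O -> Fsigma O.
Proof.
  intros HO. exists (fun n z => forall y, dist z y < (/2)^n -> O y). split.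
  - intros n x Hx. apply not_all_ex_not in Hx as [y Hy].
    apply imply_to_and in Hy as [Hxy Hy].
    exists ((/2)^n - dist x y); split; [lra|]. intros w Hw Hc. apply Hy, Hc.
    pose proof (d_tri w x y). rewrite (d_sym w x) in H. lra.
  - intros z; split.
    + intros Oz. destruct (HO z Oz) as [e [He H]]. destruct (small_pow e He) as [n Hn].
      exists n. intros y Hy. apply H. lra.
    + intros [n Hn]. apply Hn. rewrite d_refl. apply half_pow_pos.
Qed.

Lemma closed_Fsigma (C : Z -> Prop) : is_closed C -> Fsigma C.
Proof. intros H. exists (fun _ => C). split; auto. intros z; split. intros h; exists O; auto. intros [_ h]; auto. Qed.

Lemma Fsigma_empty : Fsigma (fun _ : Z => False).
Proof. apply closed_Fsigma, closed_empty. Qed.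

Lemma Fsigma_inter (A B : Z -> Prop) : Fsigma A -> Fsigma B -> Fsigma (fun z => A z /\ B z).
Proof.
  intros [F [HF EF]] [G [HG EG]].
  exists (fun k z => F (fst (of_nat k)) z /\ G (snd (of_nat k)) z). split.
  - intros k; apply closed_inter; auto.
  - intros z; split.
    + intros [Az Bz]. apply EF in Az as [a Ha]. apply EG in Bz as [b Hb].
      exists (to_nat (a,b)). rewrite cancel_of_to; simpl; auto.
    + intros [k [H1 H2]]. split; [apply EF|apply EG]; eauto.
Qed.

Lemma Fsigma_Union (A : nat -> Z -> Prop) : (forall i, Fsigma (A i)) -> Fsigma (fun z => exists i, A i z).
Proof.
  intros H.
  set (F := fun i => proj1_sig (constructive_indefinite_description _ (H i))).
  assert (HF : forall i, (forall n, is_closed (F i n)) /\ forall z, A i z <-> exists n, F i n z).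
  { intros i. exact (proj2_sig (constructive_indefinite_description _ (H i))). }
  exists (fun k => F (fst (of_nat k)) (snd (of_nat k))). split.
  - intros k. apply HF.
  - intros z; split.
    + intros [i Hi]. apply HF in Hi as [n Hn]. exists (to_nat (i,n)). rewrite cancel_of_to; auto.
    + intros [k Hk]. exists (fst (of_nat k)). apply HF. eauto.
Qed.

Lemma Fsigma_or (A B : Z -> Prop) : Fsigma A -> Fsigma B -> Fsigma (fun z => A z \/ B z).
Proof.
  intros HA HB. pose proof (Fsigma_Union (fun i => match i with O => A | _ => B end)) as H.
  destruct H as [F [HF EF]]. { intros [|i]; auto. }
  exists F; split; auto. intros z; rewrite <- EF; split.
  - intros [h|h]; [exists O|exists 1%nat]; auto.
  - intros [[|i] h]; auto.
Qed.

Lemma Fsigma_ext (A B : Z -> Prop) : Fsigma A -> (forall z, A z <-> B z) -> Fsigma B.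
Proof. intros [F [HF EF]] E. exists F; split; auto. intros z; rewrite <- E; auto. Qed.

End Metric.

Lemma closed_ext (Z : space) (A B : Z -> Prop) : is_closed A -> (forall z, A z <-> B z) -> is_closed B.
Proof.
  intros H E x Hx. destruct (H x) as [e [He H2]]. { rewrite E; auto. }
  exists e; split; auto. intros y Hy. rewrite <- E. auto.
Qed.

Lemma open_ext (Z : space) (A B : Z -> Prop) : is_open A -> (forall z, A z <-> B z) -> is_open B.
Proof.
  intros H E x Hx. destruct (H x) as [e [He H2]]. { rewrite E; auto. }
  exists e; split; auto. intros y Hy. rewrite <- E. auto.
Qed.

Lemma Dfin_ext {Z W : Type} ell (A : nat -> Z -> Prop) (B : nat -> W -> Prop) z w :
  (forall k, A k z <-> B k w) -> (Dfin ell A z <-> Dfin ell B w).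
Proof.
  intros E. unfold Dfin. split; intros [k [H1 [H2 [H3 H4]]]]; exists k; repeat split; auto;
  [apply E; auto | intros b Hb Hc; apply (H4 b Hb); apply E; auto
  | apply E; auto | intros b Hb Hc; apply (H4 b Hb); apply E; auto].
Qed.

Lemma Dfin_min {Z : Type} ell (A : nat -> Z -> Prop) z k0 :
  A k0 z -> (forall b, (b < k0)%nat -> ~ A b z) ->
  (Dfin ell A z <-> ((k0 < ell)%nat /\ Nat.odd k0 <> Nat.odd ell)).
Proof.
  intros H1 H2. unfold Dfin. split.
  - intros [k [K1 [K2 [K3 K4]]]].
    assert (k = k0). { destruct (lt_eq_lt_dec k k0) as [[h|h]|h]; auto.
      exfalso; eapply H2; eauto. exfalso; eapply K4; eauto. }
    subst; auto.
  - intros [K1 K2]. exists k0; auto.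
Qed.

Lemma Domega_min {Z : Type} (A : nat -> Z -> Prop) z k0 :
  A k0 z -> (forall b, (b < k0)%nat -> ~ A b z) ->
  (Domega A z <-> Nat.odd k0 = true).
Proof.
  intros H1 H2. unfold Domega. split.
  - intros [k [K2 [K3 K4]]].
    assert (k = k0). { destruct (lt_eq_lt_dec k k0) as [[h|h]|h]; auto.
      exfalso; eapply H2; eauto. exfalso; eapply K4; eauto. }
    subst; auto.
  - intros K2. exists k0; auto.
Qed.

Lemma exists_min {Z : Type} (A : nat -> Z -> Prop) z k : A k z ->
  exists k0, A k0 z /\ forall b, (b < k0)%nat -> ~ A b z.
Proof. intros H. apply (least_nat (fun k => A k z)). eauto. Qed.

Definition agree (k : nat) (x y : nat -> bool) : Prop := forall m, (m < k)%nat -> x m = y m.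

Lemma agree_sym k x y : agree k x y -> agree k y x.
Proof. intros H m Hm; symmetry; auto. Qed.
Lemma agree_trans k x y z : agree k x y -> agree k y z -> agree k x z.
Proof. intros H1 H2 m Hm; rewrite H1; auto. Qed.
Lemma agree_mono k k' x y : (k' <= k)%nat -> agree k x y -> agree k' x y.
Proof. intros H1 H2 m Hm; apply H2; lia. Qed.
Lemma agree_refl k x : agree k x x.
Proof. intros m _; auto. Qed.

Lemma first_diff (x y : nat -> bool) : x <> y ->
  exists n, x n <> y n /\ forall m, (m < n)%nat -> x m = y m.
Proof.
  intros H. assert (exists n, x n <> y n).
  { apply NNPP; intros H1; apply H; apply functional_extensionality; intros n.
    apply NNPP; intros H2; apply H1; eauto. }
  destruct (least_nat _ H0) as [n [Hn Hm]]. exists n; split; auto.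
  intros m Hlt. apply NNPP; intros; eapply Hm; eauto.
Qed.

Lemma cd_spec x y : (x = y /\ cantor_dist x y = 0) \/
    exists n, x n <> y n /\ (forall m, (m < n)%nat -> x m = y m) /\ cantor_dist x y = (/ 2) ^ n.
Proof.
  unfold cantor_dist. apply epsilon_spec.
  destruct (classic (x = y)) as [E|E]. exists 0; left; auto.
  destruct (first_diff x y E) as [n [H1 H2]]. exists ((/2)^n); right; eauto.
Qed.

Lemma cd_eq x y n : x n <> y n -> (forall m, (m < n)%nat -> x m = y m) -> cantor_dist x y = (/2)^n.
Proof.
  intros H1 H2. destruct (cd_spec x y) as [[E _]|[n' [H1' [H2' E]]]].
  - subst; congruence.
  - rewrite E. destruct (lt_eq_lt_dec n n') as [[h|h]|h]; subst; auto.
    + exfalso; apply H1; auto.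
    + exfalso; apply H1'; auto.
Qed.

Lemma cd_same x : cantor_dist x x = 0.
Proof. destruct (cd_spec x x) as [[_ E]|[n [H _]]]; auto. congruence. Qed.

Lemma cd_ge x y n : x n <> y n -> (/2)^n <= cantor_dist x y.
Proof.
  intros H. destruct (cd_spec x y) as [[E _]|[n' [H1' [H2' E]]]].
  - subst; congruence.
  - rewrite E. apply half_pow_le. destruct (le_lt_dec n' n); auto.
    exfalso; apply H; auto.
Qed.

Lemma cd_nonneg x y : 0 <= cantor_dist x y.
Proof.
  destruct (cd_spec x y) as [[_ E]|[n [_ [_ E]]]]; rewrite E; [lra|]. left; apply half_pow_pos.
Qed.

Lemma cd_lt x y k : cantor_dist x y < (/2)^k -> agree (S k) x y.
Proof.
  intros H m Hm. apply NNPP; intros Hn. pose proof (cd_ge x y m Hn).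
  pose proof (half_pow_le m k ltac:(lia)). lra.
Qed.

Lemma cd_agree x y k : agree (S k) x y -> cantor_dist x y < (/2)^k.
Proof.
  intros H. destruct (cd_spec x y) as [[_ E]|[n [H1 [H2 E]]]]; rewrite E.
  - apply half_pow_pos.
  - assert (k < n)%nat. { destruct (le_lt_dec n k); auto. exfalso; apply H1, H; lia. }
    pose proof (half_pow_le (S k) n H0). simpl in H3. pose proof (half_pow_pos k). lra.
Qed.

Lemma cd_agree_eps x eps : 0 < eps -> exists k, forall y, agree k x y -> cantor_dist x y < eps.
Proof.
  intros He. destruct (small_pow eps He) as [n Hn]. exists (S n). intros y Hy.
  pose proof (cd_agree x y n Hy). lra.
Qed.

Lemma cd_sym x y : cantor_dist x y = cantor_dist y x.
Proof.
  destruct (cd_spec x y) as [[E E2]|[n [H1 [H2 E]]]].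
  - subst. auto.
  - rewrite E. symmetry. apply cd_eq; auto. intros m Hm; symmetry; auto.
Qed.

Lemma cd_tri x y z : cantor_dist x z <= cantor_dist x y + cantor_dist y z.
Proof.
  pose proof (cd_nonneg x y). pose proof (cd_nonneg y z).
  destruct (cd_spec x z) as [[_ E]|[n [H1 [H2 E]]]]; rewrite E; [lra|].
  destruct (Bool.bool_dec (x n) (y n)) as [e|e].
  - assert (y n <> z n) by congruence. pose proof (cd_ge _ _ _ H3). lra.
  - pose proof (cd_ge _ _ _ e). lra.
Qed.

Lemma cantor_metric X : is_metric (cantor_subspace X).
Proof.
  split; [|split; [|split]]; simpl.
  - intros; apply cd_nonneg.
  - intros [x hx] [y hy]; simpl; split.
    + intros H. destruct (cd_spec x y) as [[E _]|[n [_ [_ E]]]].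
      * subst. f_equal. apply proof_irrelevance.
      * pose proof (half_pow_pos n). lra.
    + intros H; inversion H; subst; apply cd_same.
  - intros; apply cd_sym.
  - intros; apply cd_tri.
Qed.

Fixpoint code (x : nat -> bool) (k : nat) : nat :=
  match k with O => O | S k' => 2 * code (fun m => x (S m)) k' + Nat.b2n (x O) end.

Lemma code_spec k : forall x m, (m < k)%nat -> Nat.testbit (code x k) m = x m.
Proof.
  induction k; intros x m Hm; [lia|]. replace (code x (S k)) with (2 * code (fun m => x (S m)) k + Nat.b2n (x O))%nat by reflexivity. destruct m.
  - apply Nat.testbit_0_r.
  - rewrite Nat.testbit_succ_r. apply (IHk (fun m => x (S m))). lia.
Qed.

Definition bits (n : nat) : nat -> bool := fun m => Nat.testbit n m.

Lemma bits_code x k : agree k x (bits (code x k)).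
Proof. intros m Hm. unfold bits. rewrite code_spec; auto. Qed.

Definition cantor_full := cantor_subspace (fun _ => True).

Lemma cantor_full_sep : sep_metric cantor_full.
Proof.
  split. apply cantor_metric.
  exists (fun n => Some (exist (fun _ => True) (bits n) I)).
  intros [x hx] eps He. destruct (cd_agree_eps x eps He) as [k Hk].
  exists (code x k), (exist _ (bits (code x k)) I); split; auto.
  simpl. apply Hk, bits_code.
Qed.

Definition cclosed (F : (nat -> bool) -> Prop) : Prop :=
  forall w, ~ F w -> exists k, forall v, agree k w v -> ~ F v.

Lemma closed_full_cclosed (F : cantor_full -> Prop) :
  is_closed F -> cclosed (fun w => F (exist _ w I)).
Proof.
  intros H w Hw. destruct (H _ Hw) as [e [He H2]].
  destruct (cd_agree_eps w e He) as [k Hk]. exists k. intros v Hv.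
  apply (H2 (exist _ v I)). simpl. auto.
Qed.

Section Baire.
Variable K : (nat -> bool) -> Prop.
Variable F : nat -> (nat -> bool) -> Prop.
Hypothesis HK : cclosed K.
Hypothesis HF : forall n, cclosed (F n).
Hypothesis Hcov : forall w, K w -> exists n, F n w.

Definition Pstep n (u : nat -> bool) (k : nat) (q : (nat -> bool) * nat) :=
  agree k u (fst q) /\ K (fst q) /\ (forall v, agree (snd q) (fst q) v -> ~ F n v) /\ (k < snd q)%nat.

Lemma baire w0 : K w0 -> exists n u k, K u /\ forall v, agree k u v -> K v -> F n v.
Proof.
  intros Kw0. apply NNPP; intros Hneg.
  assert (Hs : forall n u k, K u -> exists q, Pstep n u k q).
  { intros n u k Ku. assert (exists v, agree k u v /\ K v /\ ~ F n v).
    { apply NNPP; intros H1; apply Hneg. exists n, u, k; split; auto.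
      intros v Hv Kv. apply NNPP; intros H2; apply H1; eauto. }
    destruct H as [v [H1 [H2 H3]]]. destruct (HF n v H3) as [j Hj].
    exists (v, S (Nat.max j k)). unfold Pstep; simpl; repeat split; auto; [|lia].
    intros v' Hv'. apply Hj. eapply agree_mono; [|eauto]. lia. }
  set (step := fun n (p : (nat -> bool) * nat) => epsilon (inhabits p) (Pstep n (fst p) (snd p))).
  set (sq := fix sq n := match n with O => (w0, O) | S n' => step n' (sq n') end).
  assert (Hsq : forall n, sq (S n) = epsilon (inhabits (sq n)) (Pstep n (fst (sq n)) (snd (sq n)))) by reflexivity.
  assert (Hinv : forall n, K (fst (sq n)) /\ (n <= snd (sq n))%nat).
  { induction n; [simpl; split; auto|]. destruct IHn as [IH1 IH2]. rewrite Hsq.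
    pose proof (@epsilon_spec _ (inhabits (sq n)) (Pstep n (fst (sq n)) (snd (sq n))) (Hs n _ (snd (sq n)) IH1)) as [A [B [C D]]].
    split; auto. lia. }
  assert (Hst : forall n, Pstep n (fst (sq n)) (snd (sq n)) (sq (S n))).
  { intros n. rewrite Hsq. exact (@epsilon_spec _ (inhabits (sq n)) (Pstep n (fst (sq n)) (snd (sq n))) (Hs n _ (snd (sq n)) (proj1 (Hinv n)))). }
  assert (Hcoh : forall n p, (n <= p)%nat -> agree (snd (sq n)) (fst (sq n)) (fst (sq p)) /\ (snd (sq n) <= snd (sq p))%nat).
  { intros n p Hnp. induction Hnp. split; [apply agree_refl|lia].
    destruct IHHnp as [I1 I2]. destruct (Hst m) as [A [_ [_ D]]]. split; [|lia].
    eapply agree_trans; eauto. eapply agree_mono; [|eauto]. lia. }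
  set (w := fun m => fst (sq (S m)) m).
  assert (Hw : forall n, agree (snd (sq n)) (fst (sq n)) w).
  { intros n m Hm. unfold w. destruct (le_lt_dec n (S m)).
    - apply (proj1 (Hcoh n (S m) l)); auto.
    - symmetry. apply (proj1 (Hcoh (S m) n ltac:(lia))). pose proof (proj2 (Hinv (S m))). lia. }
  assert (Kw : K w).
  { apply NNPP; intros Hk. destruct (HK w Hk) as [j Hj]. apply (Hj (fst (sq j))); [|apply Hinv].
    apply agree_sym. eapply agree_mono; [|apply Hw]. apply Hinv. }
  destruct (Hcov w Kw) as [n Fn]. destruct (Hst n) as [_ [_ [C _]]].
  apply (C w); auto.
Qed.
End Baire.

Section Ext.
Variable Z : space.
Hypothesis HZ : is_metric Z.
Variable Y : Z -> Prop.
Variable g : Z -> nat -> bool.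
Hypothesis Hg : forall y, Y y -> forall k, exists d, 0 < d /\ forall y', Y y' -> dist y y' < d -> agree k (g y) (g y').

Definition osc_ok (n : nat) (z : Z) (d : R) :=
  0 < d /\ forall y y', Y y -> Y y' -> dist z y < d -> dist z y' < d -> g y n = g y' n.

Definition Uext (n : nat) (z : Z) : Prop :=
  (exists d, osc_ok n z d) /\ (exists y, Y y /\ dist z y < (/2)^n).

Definition fext (z : Z) (n : nat) : bool :=
  let d := epsilon (inhabits 1) (osc_ok n z) in
  g (epsilon (inhabits z) (fun y => Y y /\ dist z y < d)) n.

Lemma fext_spec z n : (exists d, osc_ok n z d) -> (exists y, Y y /\ dist z y < epsilon (inhabits 1) (osc_ok n z)) ->
  osc_ok n z (epsilon (inhabits 1) (osc_ok n z)) /\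
  exists y, Y y /\ dist z y < epsilon (inhabits 1) (osc_ok n z) /\ fext z n = g y n.
Proof.
  intros H1 H2. split. apply epsilon_spec; auto.
  exists (epsilon (inhabits z) (fun y => Y y /\ dist z y < epsilon (inhabits 1) (osc_ok n z))).
  pose proof (epsilon_spec (inhabits z) _ H2) as [A B]. split; auto.
Qed.

Lemma Uext_open n : is_open (Uext n).
Proof.
  intros z [[d [Hd Hosc]] [y [Yy Hzy]]].
  exists (Rmin (d/2) ((/2)^n - dist z y)). split.
  { apply Rmin_glb_lt; lra. }
  intros w Hw. pose proof (Rmin_l (d/2) ((/2)^n - dist z y)). pose proof (Rmin_r (d/2) ((/2)^n - dist z y)).
  split.
  - exists (d/2). split; [lra|]. intros y1 y2 Y1 Y2 D1 D2. apply Hosc; auto.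
    + pose proof (d_tri Z HZ z w y1). lra.
    + pose proof (d_tri Z HZ z w y2). lra.
  - exists y; split; auto. pose proof (d_tri Z HZ w z y). rewrite (d_sym Z HZ w z) in H1. lra.
Qed.

Lemma Y_Uext y n : Y y -> Uext n y.
Proof.
  intros Yy. split.
  - destruct (Hg y Yy (S n)) as [d [Hd H]]. exists d; split; auto.
    intros y1 y2 Y1 Y2 D1 D2. rewrite <- (H y1 Y1 D1 n), <- (H y2 Y2 D2 n); auto.
  - exists y; split; auto. rewrite d_refl; auto. apply half_pow_pos.
Qed.

Lemma fext_Y y n : Y y -> fext y n = g y n.
Proof.
  intros Yy. destruct (Y_Uext y n Yy) as [H1 _].
  pose proof (epsilon_spec (inhabits 1) _ H1) as Hd.
  destruct (fext_spec y n H1) as [_ [y' [Y' [D' E]]]].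
  { exists y; split; auto. rewrite d_refl; auto. apply Hd. }
  rewrite E. apply Hd; auto. rewrite d_refl; auto. apply Hd.
Qed.

Lemma fext_cont z : (forall n, Uext n z) -> forall k, exists d, 0 < d /\
  forall w, (forall n, Uext n w) -> dist z w < d -> agree k (fext z) (fext w).
Proof.
  intros Gz k. induction k.
  - exists 1; split; [lra|]. intros; intros m Hm; lia.
  - destruct IHk as [d1 [Hd1 H1]].
    destruct (Gz k) as [Ek _]. pose proof (epsilon_spec (inhabits 1) _ Ek) as Hdk.
    set (dk := epsilon (inhabits 1) (osc_ok k z)) in *.
    assert (Hz : exists y, Y y /\ dist z y < dk).
    { destruct Hdk as [Hp _]. destruct (small_pow dk Hp) as [j Hj].
      destruct (Gz j) as [_ [y [Yy Dy]]]. exists y; split; auto. lra. }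
    destruct (fext_spec z k Ek Hz) as [_ [yz [Yz [Dz Ez]]]].
    exists (Rmin d1 (dk/2)). split. { apply Rmin_glb_lt; try lra. destruct Hdk; lra. }
    intros w Gw Dw. pose proof (Rmin_l d1 (dk/2)). pose proof (Rmin_r d1 (dk/2)).
    intros m Hm. destruct (Nat.eq_dec m k) as [->|Hne]; [|apply (H1 w Gw); [lra|lia]].
    destruct (Gw k) as [Ewk _]. pose proof (epsilon_spec (inhabits 1) _ Ewk) as Hdw.
    set (dw := epsilon (inhabits 1) (osc_ok k w)) in *.
    assert (Hdwp : 0 < dw) by apply Hdw.
    assert (Hdkp : 0 < dk) by apply Hdk.
    destruct (small_pow (Rmin dw (dk/2 - dist z w))) as [j Hj].
    { apply Rmin_glb_lt; lra. }
    pose proof (Rmin_l dw (dk/2 - dist z w)). pose proof (Rmin_r dw (dk/2 - dist z w)).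
    destruct (Gw j) as [_ [y' [Y' D']]].
    destruct (fext_spec w k Ewk) as [_ [yw [Yw [Dw' Ew]]]].
    { exists y'; split; auto. unfold dw in *. lra. }
    rewrite Ez, Ew. transitivity (g y' k).
    + apply Hdk; auto. pose proof (d_tri Z HZ z w y'). lra.
    + apply Hdw; auto. lra.
Qed.

End Ext.

Definition piece {Z : Type} (H : Z -> Prop) (A : nat -> Z -> Prop) (k : nat) (z : Z) : Prop :=
  match k with O => H z | S O => H z | S (S j) => A j z \/ H z end.

Lemma odd_SS n : Nat.odd (S (S n)) = Nat.odd n.
Proof. reflexivity. Qed.

Lemma Dfin_piece {Z : Type} m (H : Z -> Prop) (A : nat -> Z -> Prop) z :
  Nat.odd m = false ->
  (Dfin (m+2) (piece H A) z <-> ~ H z /\ Dfin m A z).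
Proof.
  intros Hm. replace (m+2)%nat with (S (S m)) by lia. unfold Dfin. split.
  - intros [k [K1 [K2 [K3 K4]]]]. rewrite odd_SS, Hm in K2.
    assert (Hk : Nat.odd k = true) by (destruct (Nat.odd k); congruence).
    destruct k as [|[|j]]; [discriminate| |].
    + exfalso. apply (K4 O); [lia|]. exact K3.
    + assert (~ H z). { intros Hz; apply (K4 O); [lia|]. exact Hz. }
      split; auto. exists j. rewrite odd_SS in Hk. repeat split; [lia|rewrite Hk,Hm; discriminate| |].
      * destruct K3; tauto.
      * intros b Hb Ab. apply (K4 (S (S b))); [lia|]. simpl; auto.
  - intros [Hz [j [J1 [J2 [J3 J4]]]]]. exists (S (S j)). rewrite !odd_SS.
    repeat split; [lia|auto|simpl; auto|].
    intros b Hb. destruct b as [|[|b]]; simpl; auto. intros [?|?]; [|tauto]. eapply J4; eauto. lia.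
Qed.

Section Combine.
Variable Z : space.
Hypothesis HZ : is_metric Z.
Variable Y : Z -> Prop.
Variable m : nat.
Hypothesis Hm : Nat.odd m = false.
Variable O H : nat -> Z -> Prop.
Variable A : nat -> nat -> Z -> Prop.
Hypothesis HO : forall i, is_open (O i).
Hypothesis HH : forall i, Fsigma (H i).
Hypothesis HA : forall i k, Fsigma (A i k).
Hypothesis HAinc : forall i a b z, (a <= b)%nat -> A i a z -> A i b z.
Hypothesis Hpiece : forall i z, (Y z /\ O i z) <-> (O i z /\ ~ H i z /\ Dfin m (A i) z).
Hypothesis Hcov : forall z, Y z -> exists i, O i z.

Definition Pc i z := O i z /\ forall j, (j < i)%nat -> ~ O j z.
Definition Dc k z := exists i, Pc i z /\ piece (H i) (A i) k z.

Lemma Pc_uniq i j z : Pc i z -> Pc j z -> i = j.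
Proof.
  intros [O1 P1] [O2 P2]. destruct (lt_eq_lt_dec i j) as [[h|h]|h]; auto.
  exfalso; eapply P2; eauto. exfalso; eapply P1; eauto.
Qed.

Lemma Pc_Fsigma i : Fsigma (Pc i).
Proof.
  apply Fsigma_inter. apply open_Fsigma; auto. apply closed_Fsigma.
  intros x Hx. apply not_all_ex_not in Hx as [j Hx]. apply imply_to_and in Hx as [Hj Hx].
  apply NNPP in Hx. destruct (HO j x Hx) as [e [He He2]]. exists e; split; auto.
  intros y Hy Hc. apply (Hc j Hj). auto.
Qed.

Lemma combine : D_fin_class Z (m+2) Y.
Proof.
  exists Dc. split; [|split].
  - intros k _. unfold Dc. apply Fsigma_Union. intros i. apply Fsigma_inter. apply Pc_Fsigma.
    destruct k as [|[|j]]; [exact (HH i)|exact (HH i)|exact (Fsigma_or Z (A i j) (H i) (HA i j) (HH i))].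
  - intros a b z Hab _ [i [Pi Di]]. exists i; split; auto.
    destruct a as [|[|a]]; destruct b as [|[|b]]; simpl in *; try lia; auto.
    destruct Di; [left; apply (HAinc i a); auto; lia|auto].
  - intros z. assert (E : forall i, Pc i z -> forall k, Dc k z <-> piece (H i) (A i) k z).
    { intros i Pi k; split. intros [i' [Pi' D]]. rewrite (Pc_uniq i i' z); auto. intros; exists i; auto. }
    split.
    + intros Yz. destruct (Hcov z Yz) as [i0 Oi0].
      destruct (least_nat (fun i => O i z)) as [i [Oi Hmin]]; eauto.
      assert (Pi : Pc i z) by (split; auto).
      rewrite (Dfin_ext _ _ (piece (H i) (A i)) z z (E i Pi)).
      apply Dfin_piece; auto. apply Hpiece. auto.
    + intros HD. assert (HD2 := HD). destruct HD2 as [k [_ [_ [[i [Pi _]] _]]]].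
      rewrite (Dfin_ext _ _ (piece (H i) (A i)) z z (E i Pi)) in HD.
      apply Dfin_piece in HD; auto. apply (proj2 (Hpiece i z)). destruct Pi; tauto.
Qed.
End Combine.

Section Piece.
Variable X : (nat -> bool) -> Prop.
Let CX := cantor_subspace X.
Variable x0 : CX.
Variable m : nat.
Variable Astar : nat -> (nat -> bool) -> Prop.
Variable Fs : nat -> nat -> (nat -> bool) -> Prop.
Hypothesis HFs : forall k r, cclosed (Fs k r).
Hypothesis HAs : forall k w, Astar k w <-> exists r, Fs k r w.
Hypothesis HAinc : forall a b w, (a <= b)%nat -> Astar a w -> Astar b w.
Variable C T : (nat -> bool) -> Prop.
Hypothesis HC : cclosed C.
Hypothesis HS1 : forall w, C w -> Dfin m Astar w -> X w.
Hypothesis HS2 : forall x : CX, T (proj1_sig x) -> C (proj1_sig x) /\ Dfin m Astar (proj1_sig x).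
Variable Z : space.
Hypothesis HZ : is_metric Z.
Variable e : CX -> Z.
Hypothesis He : embedding e.
Variables h hinv : CX -> CX.
Hypothesis Hhinv : forall x, hinv (h x) = x.
Hypothesis Hhc : continuous h.
Hypothesis Hhic : continuous hinv.
Variable cylt : (nat -> bool) -> Prop.
Variable q : nat.
Hypothesis Hcyl : forall w v, cylt w -> agree q w v -> cylt v.
Hypothesis Hgood : forall x : CX, cylt (proj1_sig x) -> T (proj1_sig (h x)).

Let Y := fun z : Z => exists x, e x = z.

Definition de (x : CX) : R := epsilon (inhabits 1) (fun d => 0 < d /\ forall y, dist (e x) (e y) < d -> dist x y < (/2)^q).

Lemma de_spec x : 0 < de x /\ forall y, dist (e x) (e y) < de x -> dist x y < (/2)^q.
Proof.
  unfold de. apply (epsilon_spec (inhabits 1) (fun d => 0 < d /\ forall y, dist (e x) (e y) < d -> dist x y < (/2)^q)). destruct He as [_ [_ H3]]. apply H3. apply half_pow_pos.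
Qed.

Definition Opc (z : Z) : Prop := exists x : CX, cylt (proj1_sig x) /\ dist (e x) z < de x.

Lemma Opc_open : is_open Opc.
Proof.
  intros z [x [Cx Dx]]. exists (de x - dist (e x) z). split; [lra|].
  intros w Hw. exists x; split; auto. pose proof (d_tri Z HZ (e x) z w). lra.
Qed.

Lemma Opc_cover x : cylt (proj1_sig x) -> Opc (e x).
Proof. intros H. exists x; split; auto. rewrite d_refl; auto. apply de_spec. Qed.

Lemma Opc_cyl x : Opc (e x) -> cylt (proj1_sig x).
Proof.
  intros [x' [C' D']]. apply (proj2 (de_spec x')) in D'. simpl in D'.
  apply cd_lt in D'. eapply Hcyl; eauto. eapply agree_mono; [|eauto]. lia.
Qed.

Lemma e_inj x y : e x = e y -> x = y.
Proof. destruct He as [_ [H _]]; auto. Qed.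

Definition x_of (z : Z) : CX := epsilon (inhabits x0) (fun x => e x = z).

Lemma x_of_e x : x_of (e x) = x.
Proof. apply e_inj. unfold x_of. apply (epsilon_spec (inhabits x0) (fun x' => e x' = e x)). eauto. Qed.

Definition gam (z : Z) : nat -> bool := proj1_sig (h (x_of z)).

Lemma gam_cont : forall y, Y y -> forall k, exists d, 0 < d /\ forall y', Y y' -> dist y y' < d -> agree k (gam y) (gam y').
Proof.
  intros y [x <-] k. destruct (Hhc x ((/2)^k) (half_pow_pos k)) as [d1 [Hd1 H1]].
  destruct He as [_ [_ H3]]. destruct (H3 x d1 Hd1) as [d2 [Hd2 H2]].
  exists d2; split; auto. intros y' [x' <-] D. unfold gam. rewrite !x_of_e.
  apply H2, H1 in D. simpl in D. apply cd_lt in D. eapply agree_mono; [|eauto]. lia.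
Qed.

Definition Gz (z : Z) := forall n, Uext Z Y gam n z.
Definition fz := fext Z Y gam.

Lemma Y_G y : Y y -> Gz y.
Proof. intros Yy n. apply Y_Uext; auto. apply gam_cont. Qed.

Lemma f_e x : fz (e x) = proj1_sig (h x).
Proof.
  apply functional_extensionality; intros n. unfold fz. rewrite fext_Y; auto.
  unfold gam. rewrite x_of_e; auto. apply gam_cont. exists x; auto.
Qed.

Lemma f_cont z : Gz z -> forall k, exists d, 0 < d /\ forall w, Gz w -> dist z w < d -> agree k (fz z) (fz w).
Proof. intros Gz0. apply fext_cont; auto. Qed.

Lemma cl_pre (Tc : (nat -> bool) -> Prop) z : cclosed Tc -> Gz z -> cl Z (fun w => Gz w /\ Tc (fz w)) z -> Tc (fz z).
Proof.
  intros HT G Hcl. apply NNPP; intros Hn. destruct (HT _ Hn) as [k Hk].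
  destruct (f_cont z G k) as [d [Hd Hf]]. destruct (Hcl d Hd) as [w [[Gw Tw] Dw]].
  apply (Hk (fz w)); auto.
Qed.

Definition Cl1 := cl Z Y.
Definition Cl2 := cl Z (fun w => Gz w /\ C (fz w)).
Definition Hpc (z : Z) : Prop := ~ Gz z \/ ~ Cl1 z \/ ~ Cl2 z.
Definition Apc (k : nat) (z : Z) : Prop := exists j r, (j <= k)%nat /\ cl Z (fun w => Gz w /\ Fs j r (fz w)) z.

Lemma Hpc_Fsigma : Fsigma Hpc.
Proof.
  apply Fsigma_or; [|apply Fsigma_or].
  - apply (Fsigma_ext Z (fun z => exists n, ~ Uext Z Y gam n z)).
    + apply Fsigma_Union. intros n. apply closed_Fsigma. apply open_compl_closed. apply Uext_open; auto.
    + intros z. unfold Gz. split. intros [n Hn] Hc; apply Hn; auto. intros Hn; apply not_all_ex_not; auto.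
  - apply open_Fsigma; auto. apply cl_closed; auto.
  - apply open_Fsigma; auto. apply cl_closed; auto.
Qed.

Lemma Apc_Fsigma k : Fsigma (Apc k).
Proof.
  apply (Fsigma_ext Z (fun z => exists t, (fst (of_nat t) <= k)%nat /\ cl Z (fun w => Gz w /\ Fs (fst (of_nat t)) (snd (of_nat t)) (fz w)) z)).
  - apply Fsigma_Union. intros t. apply closed_Fsigma.
    destruct (le_lt_dec (fst (of_nat t)) k) as [l|l].
    + apply (closed_ext Z (cl Z (fun w => Gz w /\ Fs (fst (of_nat t)) (snd (of_nat t)) (fz w)))).
      apply cl_closed; auto. intros z; tauto.
    + apply (closed_ext Z (fun _ => False)). apply closed_empty. intros z; split; [tauto|]. intros [? _]; lia.
  - intros z; split.
    + intros [t [H1 H2]]. exists (fst (of_nat t)), (snd (of_nat t)). auto.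
    + intros [j [r [H1 H2]]]. exists (to_nat (j, r)). rewrite cancel_of_to. auto.
Qed.

Lemma Apc_inc a b z : (a <= b)%nat -> Apc a z -> Apc b z.
Proof. intros H [j [r [H1 H2]]]. exists j, r; split; auto. lia. Qed.

Lemma Apc_G z k : Gz z -> (Apc k z <-> Astar k (fz z)).
Proof.
  intros G. split.
  - intros [j [r [H1 H2]]]. apply (HAinc j); auto. apply HAs. exists r. apply cl_pre; auto.
  - intros Ak. apply HAs in Ak as [r Hr]. exists k, r; split; auto. apply cl_incl; auto.
Qed.

Lemma fixpoint z (G : Gz z) (Xf : X (fz z)) (Hc : Cl1 z) : e (hinv (exist _ (fz z) Xf)) = z.
Proof.
  set (xz := exist X (fz z) Xf : CX). set (x' := hinv xz).
  apply NNPP; intros Hne.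
  assert (Hr : 0 < dist (e x') z).
  { destruct (d_pos Z HZ (e x') z) as [?|E]; auto. exfalso; apply Hne.
    destruct HZ as [_ [H2 _]]. apply H2; auto. }
  set (r := dist (e x') z) in *.
  destruct He as [Hec _]. destruct (Hec x' (r/3) ltac:(lra)) as [d1 [Hd1 H1]].
  destruct (Hhic xz d1 Hd1) as [d2 [Hd2 H2]].
  destruct (cd_agree_eps (fz z) d2 Hd2) as [k Hk].
  destruct (f_cont z G k) as [d3 [Hd3 H3]].
  destruct (Hc (Rmin d3 (r/3))) as [y [[x <-] Dy]]. { apply Rmin_glb_lt; lra. }
  pose proof (Rmin_l d3 (r/3)). pose proof (Rmin_r d3 (r/3)).
  assert (A1 := H3 (e x) (Y_G (e x) (ex_intro _ x eq_refl)) ltac:(lra)).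
  rewrite f_e in A1. apply Hk in A1.
  assert (A2 : dist xz (h x) < d2) by exact A1.
  apply H2 in A2. rewrite Hhinv in A2. apply H1 in A2.
  pose proof (d_tri Z HZ (e x') (e x) z). rewrite (d_sym Z HZ (e x) z) in H4. unfold r in *. lra.
Qed.

Lemma piece_equiv z : (Y z /\ Opc z) <-> (Opc z /\ ~ Hpc z /\ Dfin m Apc z).
Proof.
  split.
  - intros [[x <-] Oz]. pose proof (Opc_cyl x Oz) as Cx. apply Hgood in Cx.
    destruct (HS2 (h x) Cx) as [Cc Dd].
    assert (G := Y_G (e x) (ex_intro _ x eq_refl)).
    split; auto. split.
    + intros [Hn|[Hn|Hn]]; apply Hn; auto.
      * apply cl_incl; auto. exists x; auto.
      * apply cl_incl; auto. split; auto. rewrite f_e; auto.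
    + rewrite (Dfin_ext m Apc Astar (e x) (fz (e x))). rewrite f_e; auto.
      intros k; apply Apc_G; auto.
  - intros [Oz [Hn Dz]]. apply not_or_and in Hn as [G Hn]. apply not_or_and in Hn as [C1 C2].
    apply NNPP in G. apply NNPP in C1. apply NNPP in C2.
    assert (Cf : C (fz z)) by (apply cl_pre; auto).
    rewrite (Dfin_ext m Apc Astar z (fz z)) in Dz by (intros k; apply Apc_G; auto).
    assert (Xf := HS1 _ Cf Dz). split; auto.
    exists (hinv (exist _ (fz z) Xf)). apply fixpoint; auto.
Qed.

Lemma piece_data : exists (O Hs : Z -> Prop) (Aa : nat -> Z -> Prop),
  is_open O /\ Fsigma Hs /\ (forall k, Fsigma (Aa k)) /\
  (forall a b z, (a <= b)%nat -> Aa a z -> Aa b z) /\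
  (forall z, (Y z /\ O z) <-> (O z /\ ~ Hs z /\ Dfin m Aa z)) /\
  (forall x, cylt (proj1_sig x) -> O (e x)).
Proof.
  exists Opc, Hpc, Apc. split; [apply Opc_open|]. split; [apply Hpc_Fsigma|].
  split; [apply Apc_Fsigma|]. split; [apply Apc_inc|]. split; [apply piece_equiv|].
  apply Opc_cover.
Qed.
End Piece.

Lemma Fsigma_choice {Z : space} (A : nat -> Z -> Prop) : (forall n, Fsigma (A n)) ->
  exists F : nat -> nat -> Z -> Prop, (forall n r, is_closed (F n r)) /\ forall n z, A n z <-> exists r, F n r z.
Proof.
  intros H. exists (fun n => proj1_sig (constructive_indefinite_description _ (H n))).
  split; intros n; destruct (proj2_sig (constructive_indefinite_description _ (H n))) as [H1 H2]; auto.
Qed.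

Lemma odd_S_neg n : Nat.odd (S n) = negb (Nat.odd n).
Proof. rewrite Nat.odd_succ, <- Nat.negb_odd. reflexivity. Qed.

Definition e0 X : cantor_subspace X -> cantor_full := fun x => exist _ (proj1_sig x) I.

Lemma e0_emb X : embedding (e0 X).
Proof.
  split; [|split].
  - intros x eps He. exists eps; split; auto.
  - intros [x hx] [y hy] E. unfold e0 in E; simpl in E. inversion E; subst. f_equal; apply proof_irrelevance.
  - intros x eps He. exists eps; split; auto.
Qed.

Lemma e0_img X w : (exists x, e0 X x = exist _ w I) <-> X w.
Proof.
  split.
  - intros [[x hx] E]. unfold e0 in E; simpl in E. inversion E; subst; auto.
  - intros Hw. exists (exist _ w Hw). reflexivity.
Qed.

Definition Kc (X : (nat -> bool) -> Prop) (w : nat -> bool) := forall k, exists x, X x /\ agree k w x.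

Lemma Kc_closed X : cclosed (Kc X).
Proof.
  intros w Hw. apply not_all_ex_not in Hw as [k Hk]. exists k. intros v Hv Kv.
  destruct (Kv k) as [x [Xx Ax]]. apply Hk. exists x; split; auto. eapply agree_trans; eauto.
Qed.

Lemma cyl_closed q u : cclosed (fun w => agree q u w).
Proof.
  intros w Hw. exists q. intros v Hv Hc. apply Hw. eapply agree_trans; eauto. apply agree_sym; auto.
Qed.

Lemma cclosed_inter A B : cclosed A -> cclosed B -> cclosed (fun w => A w /\ B w).
Proof.
  intros HA HB w Hw. apply not_and_or in Hw as [H|H].
  - destruct (HA w H) as [k Hk]. exists k; intros v Hv [Av _]. eapply Hk; eauto.
  - destruct (HB w H) as [k Hk]. exists k; intros v Hv [_ Bv]. eapply Hk; eauto.
Qed.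

Lemma cclosed_empty : cclosed (fun _ => False).
Proof. intros w _. exists O. auto. Qed.

Lemma local_data X : (exists x, X x) -> in_Delta (cantor_subspace X) ->
  exists (m : nat) (Astar : nat -> (nat -> bool) -> Prop) (Fs : nat -> nat -> (nat -> bool) -> Prop) (q0 : nat) (u : nat -> bool), Nat.odd m = false /\ (forall k r, cclosed (Fs k r)) /\
    (forall k w, Astar k w <-> exists r, Fs k r w) /\
    (forall a b w, (a <= b)%nat -> Astar a w -> Astar b w) /\
    (forall w, Kc X w -> agree q0 u w -> Dfin m Astar w -> X w) /\
    (forall w, agree q0 u w -> X w -> Dfin m Astar w) /\
    (exists p, X p /\ agree q0 u p).
Proof.
  intros [x0 Xx0] [HDa HDb].
  destruct (HDa cantor_full cantor_full_sep (e0 X) (e0_emb X)) as [A [HA1 [HA2 HA3]]].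
  destruct (HDb cantor_full cantor_full_sep (e0 X) (e0_emb X)) as [B [HB1 [HB2 HB3]]].
  destruct (Fsigma_choice A HA1) as [FA [FA1 FA2]].
  destruct (Fsigma_choice B HB1) as [FB [FB1 FB2]].
  set (A' := fun n w => A n (exist (fun _ => True) w I)).
  set (B' := fun n w => B n (exist (fun _ => True) w I)).
  set (FA' := fun n r w => FA n r (exist (fun _ => True) w I)).
  set (FB' := fun n r w => FB n r (exist (fun _ => True) w I)).
  assert (XA : forall w, X w <-> Domega A' w). { intros w. rewrite <- e0_img. apply HA3. }
  assert (XB : forall w, ~ X w <-> Domega B' w). { intros w. rewrite <- e0_img. apply HB3. }
  set (Hf := fun k w => let (a, j) := of_nat k in let (s, n) := of_nat a in
         match s with O => FA' n j w | _ => FB' n j w end).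
  assert (HfC : forall k, cclosed (Hf k)).
  { intros k. unfold Hf. destruct (of_nat k) as [a j]. destruct (of_nat a) as [[|s] n];
    apply closed_full_cclosed; auto. }
  assert (Hcov : forall w, Kc X w -> exists k, Hf k w).
  { intros w _. destruct (classic (X w)) as [Xw|Xw].
    - apply XA in Xw as [n [_ [An _]]]. apply (FA2 n) in An as [j Hj].
      exists (to_nat (to_nat (O, n), j)). unfold Hf. rewrite !cancel_of_to. exact Hj.
    - apply XB in Xw as [n [_ [Bn _]]]. apply (FB2 n) in Bn as [j Hj].
      exists (to_nat (to_nat (1%nat, n), j)). unfold Hf. rewrite !cancel_of_to. exact Hj. }
  assert (Kx0 : Kc X x0). { intros k. exists x0; split; auto. apply agree_refl. }
  destruct (baire (Kc X) Hf (Kc_closed X) HfC Hcov x0 Kx0) as [k [u [q0 [Ku Hu]]]].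
  assert (Hp : exists p, X p /\ agree q0 u p) by (destruct (Ku q0) as [p [? ?]]; eauto).
  unfold Hf in Hu. destruct (of_nat k) as [a j]. destruct (of_nat a) as [[|s] n].
  -
    assert (An : forall v, agree q0 u v -> Kc X v -> A' n v).
    { intros v H1 H2. apply (FA2 n). exists j. apply Hu; auto. }
    exists (2 * S n)%nat, A', FA', q0, u. split; [apply Nat.odd_even|].
    split; [intros; apply closed_full_cclosed; apply FA1|].
    split; [intros; apply FA2|]. split; [intros a0 b0 w H H0; apply (HA2 a0 b0); auto|].
    split; [|split; auto].
    + intros w _ _ [z [Z1 [Z2 [Z3 Z4]]]]. apply XA. exists z; split; auto.
      rewrite Nat.odd_even in Z2. destruct (Nat.odd z); congruence.
    + intros w Hw Xw. assert (Kw : Kc X w). { intros l; exists w; split; auto; apply agree_refl. }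
      pose proof (An w Hw Kw) as Anw. destruct (exists_min A' w n Anw) as [z0 [Z1 Z2]].
      rewrite (Dfin_min _ A' w z0 Z1 Z2). apply XA in Xw. rewrite (Domega_min A' w z0 Z1 Z2) in Xw.
      rewrite Nat.odd_even, Xw. split; [|discriminate].
      destruct (le_lt_dec z0 n); [lia|]. exfalso; apply (Z2 n); auto.
  -
    assert (Bn : forall v, agree q0 u v -> Kc X v -> B' n v).
    { intros v H1 H2. apply (FB2 n). exists j. apply Hu; auto. }
    set (As := fun i w => match i with O => False | S i' => B' i' w end).
    set (Fss := fun i r w => match i with O => False | S i' => FB' i' r w end).
    assert (Emin : forall w z0, B' z0 w -> (forall b, (b < z0)%nat -> ~ B' b w) ->
               Dfin (2 * S (S n)) As w <-> ((S z0 < 2 * S (S n))%nat /\ Nat.odd (S z0) <> false)).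
    { intros w z0 Z1 Z2. rewrite <- (Nat.odd_even (S (S n))). apply Dfin_min; auto.
      intros [|b] Hb; simpl; auto. apply Z2. lia. }
    exists (2 * S (S n))%nat, As, Fss, q0, u. split; [apply Nat.odd_even|].
    split. { intros [|i] r; simpl. apply cclosed_empty. apply closed_full_cclosed; apply FB1. }
    split. { intros [|i] w; simpl. split; [tauto|intros [_ []]]. apply FB2. }
    split. { intros [|a1] [|b1] w Hab; simpl; try tauto; try lia. apply HB2; lia. }
    split; [|split; auto].
    + intros w Kw Hw Dw. pose proof (Bn w Hw Kw) as Bnw. destruct (exists_min B' w n Bnw) as [z0 [Z1 Z2]].
      apply (Emin w z0 Z1 Z2) in Dw as [_ Dw]. apply NNPP; intros Xw. apply XB in Xw.
      rewrite (Domega_min B' w z0 Z1 Z2) in Xw. rewrite odd_S_neg, Xw in Dw. auto.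
    + intros w Hw Xw. assert (Kw : Kc X w). { intros l; exists w; split; auto; apply agree_refl. }
      pose proof (Bn w Hw Kw) as Bnw. destruct (exists_min B' w n Bnw) as [z0 [Z1 Z2]].
      apply (Emin w z0 Z1 Z2). split.
      * destruct (le_lt_dec z0 n); [lia|]. exfalso; apply (Z2 n); auto.
      * assert (Nat.odd z0 = false).
        { destruct (Nat.odd z0) eqn:E; auto. exfalso. apply (proj2 (XB w)); [apply (Domega_min B' w z0 Z1 Z2); auto|exact Xw]. }
        rewrite odd_S_neg, H; discriminate.
Qed.

Definition cylI (i : nat) (w : nat -> bool) : Prop := agree (snd (of_nat i)) (bits (fst (of_nat i))) w.

Lemma homog_cover X (q0 : nat) (u : nat -> bool) :
  homogeneous (cantor_subspace X) -> (exists p, X p /\ agree q0 u p) ->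
  forall x : cantor_subspace X, exists i, cylI i (proj1_sig x) /\
    exists h hinv : cantor_subspace X -> cantor_subspace X,
      (forall x, hinv (h x) = x) /\ continuous h /\ continuous hinv /\
      forall y : cantor_subspace X, cylI i (proj1_sig y) -> agree q0 u (proj1_sig (h y)).
Proof.
  intros Hom [p [Xp Hp]] x. destruct (Hom x (exist _ p Xp)) as [h [[hinv [H1 [H2 [H3 H4]]]] Hx]].
  destruct (H3 x ((/2)^q0) (half_pow_pos q0)) as [d [Hd Hc]].
  destruct (cd_agree_eps (proj1_sig x) d Hd) as [k Hk].
  exists (to_nat (code (proj1_sig x) k, k)). unfold cylI. rewrite cancel_of_to. simpl.
  split. { apply agree_sym, bits_code. }
  exists h, hinv. split; auto. split; auto. split; auto.
  intros y Hy. assert (A : agree k (proj1_sig x) (proj1_sig y)).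
  { eapply agree_trans; [apply bits_code|exact Hy]. }
  apply Hk in A. apply Hc in A. rewrite Hx in A. simpl in A. apply cd_lt in A.
  eapply agree_trans; [exact Hp|]. eapply agree_mono; [|exact A]. lia.
Qed.

Theorem lemma7p4 (X : (nat -> bool) -> Prop) :
  homogeneous (cantor_subspace X) ->
  in_Delta (cantor_subspace X) ->
  exists ell : nat, abs_D_fin (cantor_subspace X) ell.
Proof.
  intros Hom HD. destruct (classic (exists x, X x)) as [Hne|Hne].
  2: { exists O. intros Z _ e _. exists (fun _ _ => False). split; [intros; lia|]. split; [intros; lia|].
       intros z; split. intros [[x hx] _]; exfalso; apply Hne; eauto. intros [k [Hk _]]; lia. }
  destruct (local_data X Hne HD) as [m [Astar [Fs [q0 [u [Hm [HFs [HAs [HAinc [HS1 [HS2 Hp]]]]]]]]]]].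
  destruct Hne as [x0 Xx0].
  exists (m + 2)%nat. intros Z [HZ _] e He.
  set (Y := fun z : Z => exists x, e x = z).
  set (good := fun i => exists h hinv : cantor_subspace X -> cantor_subspace X,
      (forall x, hinv (h x) = x) /\ continuous h /\ continuous hinv /\
      forall y : cantor_subspace X, cylI i (proj1_sig y) -> agree q0 u (proj1_sig (h y))).
  set (Pd := fun i (t : (Z -> Prop) * (Z -> Prop) * (nat -> Z -> Prop)) =>
    let '(Oo, Hs, Aa) := t in
    is_open Oo /\ Fsigma Hs /\ (forall k, Fsigma (Aa k)) /\
    (forall a b z, (a <= b)%nat -> Aa a z -> Aa b z) /\
    (forall z, (Y z /\ Oo z) <-> (Oo z /\ ~ Hs z /\ Dfin m Aa z)) /\
    (good i -> forall x, cylI i (proj1_sig x) -> Oo (e x))).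
  assert (Hex : forall i, exists t, Pd i t).
  { intros i. destruct (classic (good i)) as [Gi|Gi].
    - destruct Gi as [h [hinv [H1 [H2 [H3 H4]]]]].
      destruct (piece_data X (exist _ x0 Xx0) m Astar Fs HFs HAs HAinc
        (fun w => Kc X w /\ agree q0 u w) (agree q0 u)
        (cclosed_inter _ _ (Kc_closed X) (cyl_closed q0 u))
        (fun w Hw Dw => HS1 w (proj1 Hw) (proj2 Hw) Dw)) with
        (Z := Z) (e := e) (h := h) (hinv := hinv) (cylt := cylI i) (q := snd (of_nat i))
        as [Oo [Hs [Aa [P1 [P2 [P3 [P4 [P5 P6]]]]]]]]; auto.
      + intros [x hx] Hx. simpl in *. split; [split|]; auto.
        intros l; exists x; split; auto; apply agree_refl.
      + intros w v Hw Hv. unfold cylI in *. eapply agree_trans; eauto.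
      + exists (Oo, Hs, Aa). exact (conj P1 (conj P2 (conj P3 (conj P4 (conj P5 (fun _ => P6)))))).
    - exists ((fun _ => False), (fun _ => False), (fun _ _ => False)). simpl.
      split. { intros z []. } split. { apply Fsigma_empty; auto. }
      split. { intros; apply Fsigma_empty; auto. } split. { auto. }
      split. { intros z; tauto. } intros Gi'; contradiction. }
  set (pick := fun i => epsilon (inhabits ((fun _ : Z => False), (fun _ : Z => False), (fun _ (_ : Z) => False))) (Pd i)).
  assert (Hpick : forall i, Pd i (pick i)) by (intros i; apply epsilon_spec, Hex).
  set (Oi := fun i => fst (fst (pick i))).
  set (Hi := fun i => snd (fst (pick i))).
  set (Ai := fun i => snd (pick i)).
  assert (Hpk : forall i, is_open (Oi i) /\ Fsigma (Hi i) /\ (forall k, Fsigma (Ai i k)) /\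
    (forall a b z, (a <= b)%nat -> Ai i a z -> Ai i b z) /\
    (forall z, (Y z /\ Oi i z) <-> (Oi i z /\ ~ Hi i z /\ Dfin m (Ai i) z)) /\
    (good i -> forall x, cylI i (proj1_sig x) -> Oi i (e x))).
  { intros i. specialize (Hpick i). unfold Oi, Hi, Ai. destruct (pick i) as [[Oo Hs] Aa]. exact Hpick. }
  apply (combine Z HZ Y m Hm Oi Hi Ai).
  - intros i; apply Hpk.
  - intros i; apply Hpk.
  - intros i; apply Hpk.
  - intros i; apply Hpk.
  - intros i; apply Hpk.
  - intros z [x <-]. destruct (homog_cover X q0 u Hom Hp x) as [i [Ci Gi]].
    exists i. apply (Hpk i); auto.
Qed.
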